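(* Let $(R,\mathfrak{m})$ be a commutative Artinian local ring with identity, $\mathfrak{m}\neq0$ and $\mathfrak{m}^2=0$. For every integer $n\ge7$, $3\in L(x^n)$.
   Context: A nonunit polynomial in $R[x]$ is irreducible if in any factorization into two polynomials one factor is a unit of $R[x]$. A positive integer $k$ is a length of $f$ if $f$ is a product of $k$ irreducible polynomials of $R[x]$; $L(f)$ denotes the set of lengths of $f$. *)

(* Defs.v *)
From HB Require Import structures.
From mathcomp Require Import all_boot all_order all_algebra.
Set Implicit Arguments. Unset Strict Implicit. Unset Printing Implicit Defensive.
Import GRing.Theory.
Local Open Scope ring_scope.

Definition is_ideal (R : comNzRingType) (I : R -> Prop) : Prop :=
  [/\ I 0, (forall a b, I a -> I b -> I (a + b)) & (forall r a, I a -> I (r * a))].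

Definition is_maximal_ideal (R : comNzRingType) (I : R -> Prop) : Prop :=
  [/\ is_ideal I, ~ I 1 &
      forall J : R -> Prop, is_ideal J -> (forall x, I x -> J x) ->
        (forall x, J x <-> I x) \/ J 1].

Definition artinian (R : comNzRingType) : Prop :=
  forall I : nat -> R -> Prop,
    (forall n, is_ideal (I n)) ->
    (forall n x, I n.+1 x -> I n x) ->
    exists N, forall n, (N <= n)%N -> forall x, I n x <-> I N x.

Definition poly_unit (R : comNzRingType) (f : {poly R}) : Prop :=
  exists g : {poly R}, f * g = 1.

Definition poly_irreducible (R : comNzRingType) (f : {poly R}) : Prop :=
  ~ poly_unit f /\
  forall g h : {poly R}, f = g * h -> poly_unit g \/ poly_unit h.

Definition is_length (R : comNzRingType) (f : {poly R}) (k : nat) : Prop :=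
  (0 < k)%N /\
  exists s : seq {poly R},
    [/\ size s = k, (forall p, p \in s -> poly_irreducible p)
      & \prod_(p <- s) p = f].

(* Main.v *)
Require Import Defs.
From HB Require Import structures.
From mathcomp Require Import all_boot all_order all_algebra.
From mathcomp Require Import ring zify.
From Stdlib Require Import Classical.
Set Implicit Arguments. Unset Strict Implicit. Unset Printing Implicit Defensive.
Import GRing.Theory.
Local Open Scope ring_scope.

Lemma ex_least (P : nat -> Prop) n : P n -> exists i, P i /\ forall j, (j < i)%N -> ~ P j.
Proof.
elim/ltn_ind: n => n IH Pn.
case: (classic (exists j, (j < n)%N /\ P j)) => [[j [ltj Pj]]|H].
- exact: IH j ltj Pj.
- exists n; split=> // j ltj Pj; apply: H; eauto.
Qed.

Lemma ex_greatest (P : nat -> Prop) N n : P n -> (forall k, P k -> (k < N)%N) ->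
  exists i, P i /\ forall j, (i < j)%N -> ~ P j.
Proof.
move=> Pn HN.
have := HN _ Pn => ltnN.
have [k [[kN Pk] Hk]] := @ex_least (fun k => (k <= N)%N /\ P (N - k)%N) (N - n)%N
  (conj (leq_subr _ _) (eq_ind_r P Pn (subKn (ltnW ltnN)))).
exists (N - k)%N; split=> // j ltj Pj.
have jN := HN _ Pj.
apply: (Hk (N - j)%N); first lia.
split; first lia.
by rewrite subKn ?(ltnW jN).
Qed.

Section Loc.
Variable R : comNzRingType.
Variable m : R -> Prop.
Hypothesis m0 : m 0.
Hypothesis mD : forall a b, m a -> m b -> m (a + b).
Hypothesis mM : forall r a, m a -> m (r * a).
Hypothesis m1 : ~ m 1.
Hypothesis mloc : forall r, m r \/ exists s, r * s = 1.
Hypothesis mm : forall a b, m a -> m b -> a * b = 0.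

Lemma mMr a r : m a -> m (a * r).
Proof. by move=> ma; rewrite mulrC; apply: mM. Qed.
Lemma mN a : m a -> m (- a).
Proof. by move=> ma; rewrite -mulN1r; apply: mM. Qed.
Lemma mB a b : m a -> m b -> m (a - b).
Proof. by move=> ma mb; apply: mD => //; apply: mN. Qed.

Lemma msum (I : finType) (P : pred I) (F : I -> R) :
  (forall i, P i -> m (F i)) -> m (\sum_(i | P i) F i).
Proof. by move=> H; apply: big_ind. Qed.

Lemma notm_add u x : ~ m u -> m x -> ~ m (u + x).
Proof. by move=> nu mx mux; apply: nu; rewrite -(addrK x u); apply: mB. Qed.

Lemma notm_mul u v : ~ m u -> ~ m v -> ~ m (u * v).
Proof.
move=> nu nv muv.
case: (mloc u) => // -[u' hu]; case: (mloc v) => // -[v' hv].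
apply: m1; have -> : 1 = (u' * v') * (u * v).
  by rewrite mulrACA [v' * v]mulrC hv mulr1 mulrC hu.
exact: mM.
Qed.

Definition lo (p : {poly R}) i := ~ m p`_i /\ forall j, (j < i)%N -> m p`_j.
Definition hi (p : {poly R}) i := ~ m p`_i /\ forall j, (i < j)%N -> m p`_j.
Definition allm (p : {poly R}) := forall i, m p`_i.

Lemma lo_ex p : ~ allm p -> exists i, lo p i.
Proof.
move=> /not_all_ex_not [i ni].
have [k [nk Hk]] := @ex_least (fun k => ~ m p`_k) i ni.
exists k; split=> // j /Hk; exact: NNPP.
Qed.

Lemma hi_ex p : ~ allm p -> exists i, hi p i.
Proof.
move=> /not_all_ex_not [i ni].
have hb : forall k, ~ m p`_k -> (k < size p)%N.
  move=> k nk; rewrite ltnNge; apply/negP => /leq_sizeP H.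
  by apply: nk; rewrite H.
have [k [nk Hk]] := @ex_greatest (fun k => ~ m p`_k) (size p) i ni hb.
exists k; split=> // j /Hk; exact: NNPP.
Qed.

Lemma allm_mul p q : allm p -> allm (p * q).
Proof. by move=> H i; rewrite coefM; apply: msum => j _; apply: mMr. Qed.

Lemma allm_mulr p q : allm q -> allm (p * q).
Proof. by move=> H; rewrite mulrC; apply: allm_mul. Qed.

Lemma allm_mm p q : allm p -> allm q -> p * q = 0.
Proof.
move=> Hp Hq; apply/polyP => i; rewrite coefM coef0 big1 // => j _.
exact: mm.
Qed.

Lemma lo_mul g h i j : lo g i -> lo h j -> lo (g * h) (i + j).
Proof.
move=> [ng Hg] [nh Hh]; split.
  rewrite coefM (bigD1 (@Ordinal (i + j).+1 i (leq_addr j i.+1))) //= addKn.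
  apply: notm_add; first exact: notm_mul.
  apply: msum => l /= hl.
  have : (l < i)%N \/ (i < l)%N.
    by move: hl; rewrite -val_eqE /=; case: ltngtP => //; auto.
  case=> H; first by apply: mMr; apply: Hg.
  by apply: mM; apply: Hh; move: (ltn_ord l); lia.
move=> k hk; rewrite coefM; apply: msum => l _.
case: (ltnP l i) => H; first by apply: mMr; apply: Hg.
by apply: mM; apply: Hh; move: (ltn_ord l); lia.
Qed.

Lemma hi_mul g h i j : hi g i -> hi h j -> hi (g * h) (i + j).
Proof.
move=> [ng Hg] [nh Hh]; split.
  rewrite coefM (bigD1 (@Ordinal (i + j).+1 i (leq_addr j i.+1))) //= addKn.
  apply: notm_add; first exact: notm_mul.
  apply: msum => l /= hl.
  have : (l < i)%N \/ (i < l)%N.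
    by move: hl; rewrite -val_eqE /=; case: ltngtP => //; auto.
  case=> H; last by apply: mMr; apply: Hg.
  by apply: mM; apply: Hh; move: (ltn_ord l); lia.
move=> k hk; rewrite coefM; apply: msum => l _.
case: (ltnP i l) => H; first by apply: mMr; apply: Hg.
by apply: mM; apply: Hh; move: (ltn_ord l); lia.
Qed.

Lemma lo_uniq p i j : lo p i -> lo p j -> i = j.
Proof.
move=> [ni Hi] [nj Hj]; case: (ltngtP i j) => // H.
- by case: ni; apply: Hj.
- by case: nj; apply: Hi.
Qed.

Lemma hi_uniq p i j : hi p i -> hi p j -> i = j.
Proof.
move=> [ni Hi] [nj Hj]; case: (ltngtP i j) => // H.
- by case: nj; apply: Hi.
- by case: ni; apply: Hj.
Qed.

Lemma lo_hi p i j : lo p i -> hi p j -> (i <= j)%N.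
Proof.
move=> [ni Hi] [nj Hj]; rewrite leqNgt; apply/negP => H.
by case: nj; apply: Hi.
Qed.

Lemma unit_poly (p : {poly R}) : ~ m p`_0 -> (forall i, (0 < i)%N -> m p`_i) -> Defs.poly_unit p.
Proof.
move=> n0 Hi.
case: (mloc p`_0) => // -[v hv].
set q := p - (p`_0)%:P.
have qm : allm q.
  move=> i; rewrite /q coefB coefC; case: i => [|i] /=; first by rewrite subrr.
  by rewrite subr0; apply: Hi.
have qq : q * q = 0 by apply: allm_mm.
have pE : p = (p`_0)%:P + q by rewrite /q addrC subrK.
have UV : (p`_0)%:P * v%:P = 1 by rewrite -polyCM hv.
exists (v%:P - v%:P * v%:P * q).
rewrite pE.
have -> : ((p`_0)%:P + q) * (v%:P - v%:P * v%:P * q) =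
  1 + ((p`_0)%:P * v%:P - 1) * (1 - v%:P * q) - v%:P * v%:P * (q * q) by ring.
by rewrite UV qq subrr mul0r mulr0 addr0 subr0.
Qed.

Lemma irr (f : {poly R}) d : (0 < d)%N -> (forall i, i != d -> m f`_i) ->
  ~ m f`_d -> (d = 1%N \/ f`_0 != 0) -> Defs.poly_irreducible f.
Proof.
move=> d0 Hf nd Hc.
have lof : lo f d.
  by split=> // j hj; apply: Hf; rewrite ltn_eqF.
have hif : hi f d.
  by split=> // j hj; apply: Hf; rewrite gtn_eqF.
have nall : forall g h, f = g * h -> ~ allm g /\ ~ allm h.
  move=> g h fE; split=> A; apply: nd; rewrite fE.
    exact: allm_mul.
  exact: allm_mulr.
split.
  move=> [g fg].
  have ng : ~ allm g.
    move=> A; apply: m1; have := allm_mulr f A 0; by rewrite fg coefC.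
  have [j lj] := lo_ex ng.
  have l1 := lo_mul lof lj.
  have l0 : lo (f * g) 0 by rewrite fg; split=> //; rewrite coefC.
  by have := lo_uniq l1 l0; lia.
move=> g h fE.
have [ng nh] := nall g h fE.
have [i0 lg] := lo_ex ng; have [j0 lh] := lo_ex nh.
have [i1 hg] := hi_ex ng; have [j1 hh] := hi_ex nh.
have e0 : d = (i0 + j0)%N by have := lo_mul lg lh; rewrite -fE; apply: lo_uniq.
have e1 : d = (i1 + j1)%N by have := hi_mul hg hh; rewrite -fE; apply: hi_uniq.
have le1 := lo_hi lg hg; have le2 := lo_hi lh hh.
have ei : i0 = i1 by lia.
have ej : j0 = j1 by lia.
subst i1 j1.
have : i0 = 0%N \/ j0 = 0%N.
  case: Hc => [d1|Hc]; first lia.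
  case: (posnP i0) => [->|pi]; first by left.
  case: (posnP j0) => [->|pj]; first by right.
  move/negP: Hc; case; apply/eqP.
  rewrite fE coef0M; apply: mm; [exact: lg.2 | exact: lh.2].
case=> [e|e]; subst.
  by left; apply: unit_poly; [exact: lg.1 | exact: hg.2].
by right; apply: unit_poly; [exact: lh.1 | exact: hh.2].
Qed.

Lemma irrX d (q : {poly R}) : (0 < d)%N -> allm q -> q`_d = 0 ->
  (d = 1%N \/ q`_0 != 0) -> Defs.poly_irreducible ('X^d + q).
Proof.
move=> d0 qm qd Hc; apply: (irr d0).
- by move=> i /negPf id; rewrite coefD coefXn id add0r.
- by rewrite coefD coefXn eqxx qd addr0.
- by rewrite coefD coefXn (_ : (0 == d)%N = false) ?add0r //; lia.
Qed.

End Loc.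

Theorem lemma4p12 (R : comNzRingType) (m : R -> Prop)
  (hart : artinian R)
  (hmax : is_maximal_ideal m)
  (hloc : forall J : R -> Prop, is_maximal_ideal J -> forall x, J x <-> m x)
  (hm0 : exists a : R, m a /\ a != 0)
  (hm2 : forall a b : R, m a -> m b -> a * b = 0)
  (n : nat) (hn : (7 <= n)%N) :
  is_length ('X^n : {poly R}) 3.
Proof.
case: hmax => [[m0 mD mM] m1 mx].
have mloc : forall r, m r \/ exists s, r * s = 1.
  move=> r.
  pose J y := exists x s, m x /\ y = x + r * s.
  have JI : is_ideal J.
    split.
    - by exists 0, 0; rewrite mulr0 addr0.
    - move=> _ _ [x [s [mx1 ->]]] [y [t [my ->]]].
      exists (x + y), (s + t); split; first exact: mD.
      by rewrite mulrDr addrACA.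
    - move=> r' _ [x [s [mx1 ->]]]; exists (r' * x), (r' * s); split; first exact: mM.
      by rewrite mulrDr mulrCA.
  have mJ : forall x, m x -> J x by move=> x mx1; exists x, 0; rewrite mulr0 addr0.
  case: (mx J JI mJ) => [H|[x [s [mx1 e]]]].
    by left; apply/H; exists 0, 1; rewrite mulr1 add0r.
  right; exists (s * (1 + x)).
  rewrite mulrA.
  have -> : r * s = 1 - x by rewrite e addrC addKr.
  have -> : (1 - x) * (1 + x) = 1 - x * x by ring.
  by rewrite hm2 // subr0.
have mN : forall a, m a -> m (- a) by move=> a ma; rewrite -mulN1r; apply: mM.
have mB : forall a b, m a -> m b -> m (a - b) by move=> a b ma mb; apply: mD => //; apply: mN.
case: hm0 => a [ma a0].
set A := a%:P.
have AA : A * A = 0 by rewrite /A -polyCM hm2.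
have allmC : allm m A.
  by move=> i; rewrite /A coefC; case: (i == 0%N).
have irr := @irrX R m m0 mD mM m1 mloc hm2.
split=> //.
case/boolP: (odd n) => on.
- set d := n./2.
  have nE : n = (d + d).+1 by rewrite /d -[LHS]odd_double_half on addnn.
  have d3 : (3 <= d)%N by lia.
  clearbody d; subst n.
  exists [:: 'X^1 + 0; 'X^d + A; 'X^d + - A]; split=> //.
    move=> p; rewrite !inE => /or3P [] /eqP ->.
    - by apply: irr => //; [move=> i; rewrite coef0 | rewrite coef0 | left].
    - apply: irr; [lia | exact: allmC | by rewrite /A coefC; rewrite (_ : (d == 0%N) = false) //; lia | right].
      by rewrite /A coefC.
    - apply: irr; [lia | by move=> i; rewrite coefN; apply: mN; exact: allmC | by rewrite coefN /A coefC (_ : (d == 0%N) = false) ?oppr0 //; lia | right].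
      by rewrite coefN /A coefC oppr_eq0.
  rewrite !big_cons big_nil [in RHS]exprS exprD.
  have -> : ('X^1 + 0) * (('X^d + A) * (('X^d + - A) * 1)) =
    'X * ('X^d * 'X^d) - 'X * (A * A) by ring.
  by rewrite AA mulr0 subr0.
- set e := (n./2).-1.
  have nE : n = (e + e + 2)%N.
    by rewrite /e -[LHS]odd_double_half (negPf on) add0n -addnn; lia.
  have e3 : (3 <= e)%N by lia.
  set Y : {poly R} := 'X^(e - 2).
  set q := - A - a *: Y.
  exists [:: 'X^2 + A; 'X^e + A; 'X^e + q]; split=> //.
    move=> p; rewrite !inE => /or3P [] /eqP ->.
    - apply: irr; [by [] | exact: allmC | by rewrite /A coefC | right].
      by rewrite /A coefC.
    - apply: irr; [lia | exact: allmC | by rewrite /A coefC; rewrite (_ : (e == 0%N) = false) //; lia | right].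
      by rewrite /A coefC.
    - have qc : forall i, q`_i = - (if i == 0%N then a else 0) - a * (i == (e - 2)%N)%:R.
        by move=> i; rewrite /q coefB coefN /A coefC coefZ coefXn.
      apply: irr; [lia | | | right].
      + move=> i; rewrite qc; apply: mB; first by apply: mN; case: (i == 0%N).
        by rewrite mulrC; apply: mM.
      + rewrite qc; have -> : (e == 0%N) = false by lia.
        have -> : (e == (e - 2)%N) = false by lia.
        by rewrite mulr0n mulr0 oppr0 addr0.
      + rewrite qc eqxx; have -> : (0 == (e - 2))%N = false by lia.
        by rewrite mulr0n mulr0 subr0 oppr_eq0.
  have XE : 'X^e = 'X^2 * Y by rewrite /Y -exprD; congr (_ ^+ _); lia.
  have XN : 'X^n = 'X^6 * (Y * Y) :> {poly R}.
    by rewrite /Y -!exprD; congr (_ ^+ _); lia.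
  rewrite !big_cons big_nil XN /q XE -mul_polyC -/A.
  have -> : ('X^2 + A) * (('X^2 * Y + A) * (('X^2 * Y + (- A - A * Y)) * 1)) =
    'X^6 * (Y * Y) + A * A * ('X^2 * Y - ('X^2 + 'X^2 * Y) * (1 + Y) - A * (1 + Y)) by ring.
  by rewrite AA mul0r addr0.
Qed.
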